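(* Let $X$ be a nonempty set, $f:X\to X$ a function, and $\tau_2$ the fuzzy topology on $X$ defined below. Then $f:(X,\tau_2)\to(X,\tau_2)$ is open if and only if $f$ is onto.
   Context: A fuzzy subset of $X$ is a function $\mu:X\to[0,1]$; union is the pointwise supremum, intersection the pointwise minimum; $\emptyset$ is the constant $0$ and $X$ the constant $1$. A fuzzy topology is a family of fuzzy subsets containing $\emptyset$ and $X$, closed under arbitrary unions and finite intersections; the topology generated by a base $\mathbb{B}$ consists of $\emptyset$ and all unions of subfamilies of $\mathbb{B}$. $\mathbb{N}=\{1,2,\dots\}$, $f^0=\mathrm{id}_X$, $f^{n+1}=f^n\circ f$. Definition of $\tau_2$: $J_0=\bigcap_{n\in\mathbb{N}} f^n(X)$, $J_n=f^{n-1}(X)\setminus f^n(X)$ for $n\in\mathbb{N}$; for $m\in\mathbb{N}$, $\mu_{K_m}(x)=\min\{1,n/m\}$ if $x\in J_n$ with $n\ge1$, and $\mu_{K_m}(x)=1$ otherwise; $\tau_2$ is generated by the base $\{K_m:m\in\mathbb{N}\}$. The image of a fuzzy set $A$ is $\mu_{f(A)}(y)=\sup\{\mu_A(x):f(x)=y\}$, and $0$ if $y\notin f(X)$. $f$ is open if $f(U)$ is open for every open fuzzy set $U$. *)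

(* Defs.v *)
From Stdlib Require Import Reals.
Open Scope R_scope.

(* Fuzzy subsets of X: membership functions X -> [0,1] (as functions X -> R). *)
Definition fuzzy (X : Type) := X -> R.

Definition fpow {X : Type} (f : X -> X) (n : nat) : X -> X := Nat.iter n f.

Definition in_fimage {X : Type} (f : X -> X) (n : nat) (x : X) : Prop :=
  exists y, fpow f n y = x.

(* x in J_n for n >= 1 : J_n = f^(n-1)(X) \ f^n(X) *)
Definition inJ {X : Type} (f : X -> X) (n : nat) (x : X) : Prop :=
  in_fimage f (n - 1) x /\ ~ in_fimage f n x.

(* Kval f m x r  :<->  mu_{K_m}(x) = r.
   mu_{K_m}(x) = min{1, n/m} if x in J_n with n >= 1, and 1 otherwise.
   (The J_n, n >= 1, are pairwise disjoint, so this determines r uniquely.) *)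
Definition Kval {X : Type} (f : X -> X) (m : nat) (x : X) (r : R) : Prop :=
  (exists n : nat, (1 <= n)%nat /\ inJ f n x /\ r = Rmin 1 (INR n / INR m))
  \/ ((forall n : nat, (1 <= n)%nat -> ~ inJ f n x) /\ r = 1).

(* U is open in tau_2: U is empty or a union (pointwise supremum) of a
   subfamily {K_m : m in S} (m ranging over N = {1,2,...}) of the base.
   Including the value 0 in the supremum accounts for the empty set / the
   empty union (all values lie in [0,1]). *)
Definition tau2_open {X : Type} (f : X -> X) (U : fuzzy X) : Prop :=
  exists S : nat -> Prop,
    forall x : X,
      is_lub (fun r => r = 0 \/
                       exists m : nat, (1 <= m)%nat /\ S m /\ Kval f m x r)
             (U x).

(* V is the image f(A): mu_V(y) = sup{mu_A(x) : f x = y}, and 0 if y not in f(X).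
   (Adding 0 to the set does not change the sup for nonnegative A and gives
   0 when the fibre is empty.) *)
Definition is_fuzzy_image {X : Type} (f : X -> X) (A V : fuzzy X) : Prop :=
  forall y : X, is_lub (fun r => r = 0 \/ exists x, f x = y /\ r = A x) (V y).

Definition tau2_open_map {X : Type} (f : X -> X) : Prop :=
  forall U : fuzzy X, tau2_open f U ->
    exists V : fuzzy X, is_fuzzy_image f U V /\ tau2_open f V.

(* Main.v *)
Require Import Defs.
From Stdlib Require Import Reals Lra Lia Classical.
Open Scope R_scope.

Lemma onto_fimage (X : Type) (f : X -> X) :
  (forall y : X, exists x : X, f x = y) -> forall n x, in_fimage f n x.
Proof.
  intros Hon n; induction n as [|n IH]; intros x.
  - exists x; reflexivity.
  - destruct (Hon x) as [z Hz]. destruct (IH z) as [w Hw].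
    exists w. unfold fpow in *. simpl. rewrite Hw. exact Hz.
Qed.

Lemma onto_Kval (X : Type) (f : X -> X) :
  (forall y : X, exists x : X, f x = y) -> forall m x r, Kval f m x r <-> r = 1.
Proof.
  intros Hon m x r; split.
  - intros [[n [Hn [[_ HJ] _]]] | [_ Hr]]; [|exact Hr].
    exfalso; apply HJ; apply onto_fimage; exact Hon.
  - intros ->. right. split; [|reflexivity].
    intros n _ [_ HJ]; apply HJ; apply onto_fimage; exact Hon.
Qed.

Theorem theorem2p10 (X : Type) (x0 : X) (f : X -> X) :
  tau2_open_map f <-> (forall y : X, exists x : X, f x = y).
Proof.
  split.
  - intros Hop y. destruct (classic (exists x, f x = y)) as [H|H]; [exact H|].
    exfalso.
    assert (HU : tau2_open f (fun _ => 1)).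
    { exists (fun m => m = 1%nat). intros x. split.
      - intros r [->|[m [Hm [-> HK]]]]; [lra|].
        destruct HK as [[n [Hn [_ ->]]]|[_ ->]]; [|lra].
        simpl. unfold Rmin. destruct (Rle_dec 1 (INR n / 1)); lra.
      - intros b Hb. apply Hb. right. exists 1%nat. split; [lia|]. split; [reflexivity|].
        destruct (classic (exists n, (1 <= n)%nat /\ inJ f n x)) as [[n [Hn HJ]]|Hn].
        + left. exists n. split; [exact Hn|]. split; [exact HJ|].
          apply le_INR in Hn. simpl in Hn. simpl. unfold Rmin.
          destruct (Rle_dec 1 (INR n / 1)); lra.
        + right. split; [|reflexivity]. intros n H1 H2. apply Hn. exists n. auto. }
    destruct (Hop _ HU) as [V [HV [S HS]]].
    assert (Hy : V y <= 0).
    { destruct (HV y) as [_ Hl]. apply Hl. intros r [->|[x [Hx _]]]; [lra|].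
      exfalso; apply H; exists x; exact Hx. }
    assert (HSe : forall m, (1 <= m)%nat -> S m -> False).
    { intros m Hm Sm. destruct (HS y) as [Hu _].
      assert (Hr : Rmin 1 (INR 1 / INR m) <= V y).
      { apply Hu. right. exists m. split; [exact Hm|]. split; [exact Sm|].
        left. exists 1%nat. split; [lia|]. split; [|reflexivity].
        split. exists y; reflexivity.
        intros [z Hz]. apply H. exists z. exact Hz. }
      apply le_INR in Hm. simpl in Hm, Hr.
      assert (0 < 1 / INR m) by (apply Rdiv_lt_0_compat; lra).
      unfold Rmin in Hr. destruct (Rle_dec 1 (1 / INR m)); lra. }
    assert (H1 : 1 <= V (f x0)).
    { destruct (HV (f x0)) as [Hu _]. apply Hu. right. exists x0. auto. }
    assert (H2 : V (f x0) <= 0).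
    { destruct (HS (f x0)) as [_ Hl]. apply Hl.
      intros r [->|[m [Hm [Sm _]]]]; [lra|]. exfalso; exact (HSe m Hm Sm). }
    lra.
  - intros Hon U [S HS]. exists U. split.
    + assert (Hc : forall x z, U x <= U z).
      { intros x z. destruct (HS x) as [_ Hl]. apply Hl.
        intros r Hr. destruct (HS z) as [Hu _]. apply Hu.
        destruct Hr as [->|[m [Hm [Sm HK]]]]; [left; reflexivity|].
        right. exists m. split; [exact Hm|]. split; [exact Sm|].
        apply (onto_Kval X f Hon). apply (onto_Kval X f Hon) in HK. exact HK. }
      assert (H0 : forall x, 0 <= U x).
      { intros x. destruct (HS x) as [Hu _]. apply Hu. left; reflexivity. }
      intros y. split.
      * intros r [->|[x [_ ->]]]; [apply H0|apply Hc].
      * intros b Hb. destruct (Hon y) as [x Hx]. apply Rle_trans with (U x).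
        apply Hc. apply Hb. right. exists x. split; [exact Hx|reflexivity].
    + exists S. exact HS.
Qed.
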